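(* Let $G$ be a vertex-color-avoiding connected graph on $n$ vertices whose vertices are colored with exactly $k\in\mathbb{Z}_+$ colors. Then $|E(G)|\ge n-1$ if $k\le 2$, and $|E(G)|\ge n$ if $k\ge 3$; moreover these lower bounds are sharp (attained by suitable such graphs).
   Context: Vertex-colorings are arbitrary (not necessarily proper). Two vertices $u,v$ of a vertex-colored graph are vertex-$c$-avoiding connected (for a color $c$) if there is a $u$-$v$ path and either at least one of $u,v$ has color $c$ or some $u$-$v$ path contains no vertex of color $c$. The graph is vertex-color-avoiding connected if any two vertices are vertex-$c$-avoiding connected for every color $c$. *)

(* Defs.v *)
From mathcomp Require Import all_boot.
Set Implicit Arguments. Unset Strict Implicit. Unset Printing Implicit Defensive.

(* A finite simple graph: vertex type T : finType, adjacency e : rel T,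
   required (in the theorem) to be symmetric and irreflexive. *)

Definition edge_set (T : finType) (e : rel T) : {set {set T}} :=
  [set [set x; y] | x in T, y in T & e x y].

Definition avoid_rel (T : finType) (k : nat) (e : rel T) (col : T -> 'I_k)
    (c : 'I_k) : rel T :=
  [rel x y | [&& e x y, col x != c & col y != c]].

Definition vc_avoiding_connected (T : finType) (k : nat) (e : rel T)
    (col : T -> 'I_k) (c : 'I_k) (u v : T) : Prop :=
  connect e u v /\
  (col u = c \/ col v = c \/ connect (avoid_rel e col c) u v).

Definition vca_connected (T : finType) (k : nat) (e : rel T)
    (col : T -> 'I_k) : Prop :=
  forall (c : 'I_k) (u v : T), vc_avoiding_connected e col c u v.

Definition uses_exactly (T : finType) (k : nat) (col : T -> 'I_k) : Prop :=
  forall i : 'I_k, exists x, col x = i.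

(* Main.v *)
Require Import Defs.
From mathcomp Require Import all_boot zify.
Set Implicit Arguments. Unset Strict Implicit. Unset Printing Implicit Defensive.

Lemma in_edge_set (T:finType) (e:rel T) E :
  reflect (exists x y, e x y /\ E = [set x; y]) (E \in edge_set e).
Proof.
apply: (iffP imset2P).
  by case=> x y _; rewrite inE /= => exy ->; exists x, y.
by case=> x [y [exy ->]]; apply: (Imset2spec (x1:=x) (x2:=y)); rewrite ?inE.
Qed.

Lemma edge_set_mono (T:finType) (r1 r2 : rel T) :
  (forall a b, r1 a b -> r2 a b) -> edge_set r1 \subset edge_set r2.
Proof.
move=> H; apply/subsetP=> E /in_edge_set [x [y [rxy ->]]].
by apply/in_edge_set; exists x, y; split => //; apply: H.
Qed.

Lemma crossing (T : finType) (e : rel T) (A : {pred T}) u v :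
  connect e u v -> u \in A -> v \notin A ->
  exists x y, [/\ x \in A, y \notin A & e x y].
Proof.
move=> /connectP [p Hp ->] {v}.
elim: p u Hp => [|z p IH] u /=; first by move=> _ ->.
case/andP=> euz pz uA lA.
case zA: (z \in A); first exact: (IH z pz zA lA).
by exists u, z; rewrite zA.
Qed.

Definition restr (T : finType) (r : rel T) (A : {set T}) : rel T :=
  [rel a b | [&& r a b, a \in A & b \in A]].

Lemma conn_bound (T : finType) (r : rel T) (S : {set T}) :
  (forall a b, r a b -> b \in S) ->
  (forall u v, u \in S -> v \in S -> connect r u v) ->
  #|S| <= #|edge_set r| + 1.
Proof.
move=> supp conn.
have [/eqP S0|/set0Pn [s sS]] := boolP (S == set0); first by rewrite S0 cards0.
suff: forall j, exists A : {set T},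
   [/\ s \in A, A \subset S, minn j.+1 #|S| <= #|A| &
       #|A| <= #|edge_set (restr r A)| + 1].
  move=> /(_ #|S|) [A [sA AS le1 le2]].
  have : minn #|S|.+1 #|S| = #|S| by apply/minn_idPr.
  move=> E; rewrite E in le1.
  apply: (leq_trans le1); apply: (leq_trans le2); rewrite leq_add2r.
  apply: subset_leq_card; apply: edge_set_mono => a b /andP [] //.
elim=> [|j [A [sA AS le1 le2]]].
  exists [set s]; split => //; first by rewrite set11.
  - by rewrite sub1set.
  - by rewrite cards1 geq_minl.
  - by rewrite cards1 leq_addl.
have [AS'|] := boolP (#|S| <= #|A|).
  exists A; split => //; apply: leq_trans AS'; exact: geq_minr.
rewrite -ltnNge => ltAS.
have [y yS yA] : exists2 y, y \in S & y \notin A.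
  have /properP [_ [y yS yA]] : A \proper S by rewrite properEcard AS ltAS.
  by exists y.
have [x [z [xA zA rxz]]] := crossing (conn s y sS yS) sA yA.
exists (z |: A); split.
- by rewrite in_setU1 sA orbT.
- by rewrite subUset sub1set AS (supp _ _ rxz).
- rewrite cardsU1 zA add1n; move: le1 ltAS; clear; lia.
- rewrite cardsU1 zA add1n.
  suff H: #|edge_set (restr r A)| < #|edge_set (restr r (z |: A))|.
    by move: H le2; clear; lia.
  apply: proper_card.
  apply/properP; split.
    apply: edge_set_mono => a b /and3P [rab aA bA]; apply/and3P; split => //.
    by rewrite in_setU1 aA orbT.
    by rewrite in_setU1 bA orbT.
  exists [set x; z].
    apply/in_edge_set; exists x, z; split => //; apply/and3P; split => //.
      by rewrite in_setU1 xA orbT.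
    by rewrite in_setU1 eqxx.
  apply/in_edge_set=> [[a [b [/and3P [_ aA bA] E]]]].
  have : z \in [set a; b] by rewrite -E set22.
  by rewrite !inE => /orP [] /eqP zE; rewrite zE ?aA ?bA in zA.
Qed.


Lemma card_exchange (I J : finType) (P : I -> J -> bool) :
  \sum_(i : I) #|[set j | P i j]| = \sum_(j : J) #|[set i | P i j]|.
Proof.
transitivity (\sum_(i : I) \sum_(j : J) (P i j : nat)).
  apply: eq_bigr => i _; rewrite -sum1dep_card big_mkcond /=.
  by apply: eq_bigr => j _; case: (P i j).
transitivity (\sum_(j : J) \sum_(i : I) (P i j : nat)); first exact: exchange_big.
apply: eq_bigr => j _.
by rewrite -sum1dep_card [RHS]big_mkcond; apply: eq_bigr => i _; case: (P i j).
Qed.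

Lemma two_col (T : finType) k (col : T -> 'I_k) a b :
  col @: [set a; b] = [set col a; col b].
Proof. by rewrite imsetU1 imset_set1. Qed.

Lemma part1_big (T : finType) (e : rel T) (k : nat) (col : T -> 'I_k) :
  symmetric e -> 2 < k -> uses_exactly col -> vca_connected e col ->
  #|T| <= #|edge_set e|.
Proof.
move=> esym k3 uses vca.
set Ed := edge_set e.
pose S c := [set x | col x != c].
pose X c := #|edge_set (avoid_rel e col c)|.
have h1 c : #|S c| <= X c + 1.
  apply: conn_bound.
    by move=> a b /and3P [_ _ ?]; rewrite inE.
  move=> u v; rewrite !inE => /negP cu /negP cv.
  have [_ [/eqP|[/eqP|//]]] := vca c u v; by [move/cu | move/cv].
have h2 : \sum_c #|S c| = #|T| * k.-1.
  have -> : #|T| * k.-1 = \sum_(x : T) k.-1 by rewrite sum_nat_const.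
  rewrite card_exchange; apply: eq_bigr => x _.
  have := cardsC [set col x]; rewrite cards1 card_ord.
  have -> : #|~: [set col x]| = #|[set c | col x != c]|.
    by apply: eq_card => c; rewrite !inE eq_sym.
  lia.
have h3 c : X c <= #|[set E | (E \in Ed) && (c \notin col @: E)]|.
  apply: subset_leq_card; apply/subsetP => E /in_edge_set [a [b [/and3P [eab ca cb] ->]]].
  rewrite inE; apply/andP; split; first by apply/in_edge_set; exists a, b.
  by rewrite two_col !inE negb_or ![c == _]eq_sym ca cb.
have h4 : \sum_c #|[set E | (E \in Ed) && (c \notin col @: E)]|
          = \sum_(E in Ed) #|~: (col @: E)|.
  rewrite card_exchange [RHS]big_mkcond; apply: eq_bigr => E _.
  case: (E \in Ed) => /=; last by apply/eqP; rewrite cards_eq0; apply/eqP/setP => c; rewrite !inE.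
  by apply: eq_card => c; rewrite !inE.
have h5 : \sum_(E in Ed) #|~: (col @: E)| + \sum_(E in Ed) #|col @: E| = #|Ed| * k.
  rewrite -big_split /= -sum_nat_const; apply: eq_bigr => E _.
  by rewrite addnC cardsC card_ord.
have h6 : #|Ed| + 2 <= \sum_(E in Ed) #|col @: E|.
  have ge1 E : E \in Ed -> 1 <= #|col @: E|.
    by case/in_edge_set=> a [b [_ ->]]; rewrite two_col cards2.
  have [E1 [E2 [E1d E2d E12 [c1 c2]]]] : exists E1 E2, [/\ E1 \in Ed, E2 \in Ed, E1 != E2 &
       2 <= #|col @: E1| /\ 2 <= #|col @: E2|].
    pose c0 : 'I_k := Ordinal (ltn_trans (isT : 0 < 2) k3).
    pose c1 : 'I_k := Ordinal (ltn_trans (isT : 1 < 2) k3).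
    pose c2 : 'I_k := Ordinal k3.
    have [u0 u0c] := uses c0; have [u1 u1c] := uses c1; have [u2 u2c] := uses c2.
    have i0 : u0 \in [pred z | col z == c0] by rewrite inE /= u0c.
    have i1 : u1 \notin [pred z | col z == c0] by rewrite inE /= u1c.
    have [x [y [xA yA exy]]] := @crossing T e [pred z | col z == c0] u0 u1
       ((vca c0 u0 u1).1) i0 i1.
    rewrite inE /= in xA yA.
    pose j := if col y == c2 then c1 else c2.
    have jy : j != col y.
      rewrite /j; case: (col y =P c2) => [->|/eqP]; first by [].
      by rewrite eq_sym.
    have j0 : j != c0 by rewrite /j; case: ifP.
    have [uj ujc] := uses j.
    have i2 : uj \in [pred z | col z == j] by rewrite inE /= ujc.
    have i3 : u0 \notin [pred z | col z == j] by rewrite inE /= u0c eq_sym.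
    have [x' [y' [xA' yA' exy']]] := @crossing T e [pred z | col z == j] uj u0
       ((vca c0 uj u0).1) i2 i3.
    rewrite inE /= in xA' yA'.
    exists [set x; y], [set x'; y']; split.
    - by apply/in_edge_set; exists x, y.
    - by apply/in_edge_set; exists x', y'.
    - apply/eqP => E; have : x' \in [set x; y] by rewrite E set21.
      rewrite !inE => /orP [] /eqP xx.
        by move: xA' j0; rewrite xx (eqP xA) => /eqP ->; rewrite eqxx.
      by move: xA' jy; rewrite xx => /eqP ->; rewrite eqxx.
    - by rewrite !two_col !cards2 (eqP xA) eq_sym yA (eqP xA') eq_sym yA'.
  pose D := [set E1; E2].
  apply: (@leq_trans (\sum_(E in Ed) (1 + (E \in D)))).
    rewrite big_split /= sum1_card.
    rewrite leq_add2l.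
    have -> : \sum_(E in Ed) (E \in D : nat) = \sum_(E in Ed | E \in D) 1.
      by rewrite big_mkcondr /=; apply: eq_bigr => E _; case: (E \in D).
    rewrite sum1dep_card.
    have -> : [set E | (E \in Ed) && (E \in D)] = D.
      apply/setP => E; rewrite !inE.
      apply/andP/idP => [[]//|H]; split => //.
      by move: H => /orP [] /eqP ->.
    by rewrite cards2 E12.
  apply: leq_sum => E Ed'; rewrite !inE.
  case: eqP => [->|_] //=; case: eqP => [->|_] //=; rewrite ?addn0; auto.
have hX : \sum_c X c <= \sum_(E in Ed) #|~: (col @: E)|.
  by rewrite -h4; apply: leq_sum => c _; apply: h3.
have hS : \sum_c #|S c| <= \sum_c X c + k.
  have hk : \sum_(c : 'I_k) 1 = k by rewrite sum1_card card_ord.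
  apply: (@leq_trans (\sum_c (X c + 1))); first by apply: leq_sum => c _; apply: h1.
  by rewrite big_split /= hk.
move: h2 hX hS h5 h6 k3; clear.
set n := #|T|; set m := #|Ed|; set A := \sum_(E in Ed) _; set B := \sum_(E in Ed) _.
set SS := \sum_c _; set XX := \sum_c _.
nia.
Qed.


Lemma chain (T : finType) (r : rel T) (f : nat -> T) m :
  (forall i, i < m -> r (f i) (f i.+1)) -> forall j, j <= m -> connect r (f 0) (f j).
Proof.
move=> H; elim=> [|j IH] jm; first exact: connect0.
exact: connect_trans (IH (ltnW jm)) (connect1 (H j jm)).
Qed.

Lemma conn_from (T : finType) (r : rel T) (P : pred T) (s : T) :
  symmetric r -> (forall u, P u -> connect r s u) ->
  forall u v, P u -> P v -> connect r u v.
Proof.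
move=> sym H u v Pu Pv; apply: connect_trans (H v Pv).
by rewrite (sym_connect_sym sym); apply: H.
Qed.

Definition pathrel n : rel 'I_n :=
  [rel x y | (nat_of_ord y == (nat_of_ord x).+1) || (nat_of_ord x == (nat_of_ord y).+1)].
Definition cycrel n : rel 'I_n :=
  [rel x y | (nat_of_ord y == (nat_of_ord x).+1 %% n) || (nat_of_ord x == (nat_of_ord y).+1 %% n)].

Arguments pathrel : clear implicits.
Arguments cycrel : clear implicits.

Lemma set2C (T : finType) (a b : T) : [set a; b] = [set b; a].
Proof. by apply/setP => z; rewrite !inE orbC. Qed.

Lemma path_card n : #|edge_set (pathrel n.+1)| = n.
Proof.
pose h (i : 'I_n) : {set 'I_(n.+1)} := [set inord i; inord i.+1].
have hinj : injective h.
  move=> i j E.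
  have : (inord i : 'I_(n.+1)) \in h j by rewrite -E set21.
  have : (inord j : 'I_(n.+1)) \in h i by rewrite E set21.
  have v0 (a : 'I_n) : nat_of_ord (inord a : 'I_(n.+1)) = a.
    by rewrite inordK // ltnS ltnW.
  have v1 (a : 'I_n) : nat_of_ord (inord a.+1 : 'I_(n.+1)) = a.+1.
    by rewrite inordK // ltnS ltn_ord.
  rewrite !inE => /orP [] /eqP /(congr1 val); rewrite /= ?v0 ?v1 => H1
   /orP [] /eqP /(congr1 val); rewrite /= ?v0 ?v1 => H2;
   apply: ord_inj; move: H1 H2; clear; lia.
suff -> : edge_set (pathrel n.+1) = h @: setT by rewrite card_imset // cardsT card_ord.
apply/setP => E; apply/in_edge_set/imsetP.
  move=> [x [y [/orP [] /eqP H ->]]].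
    have xn : x < n by move: (ltn_ord y); lia.
    exists (Ordinal xn) => //; rewrite /h /=.
    by congr [set _; _]; apply: ord_inj; rewrite /= inordK //; lia.
  have yn : y < n by move: (ltn_ord x); lia.
  exists (Ordinal yn) => //; rewrite /h /= set2C.
  by congr [set _; _]; apply: ord_inj; rewrite /= inordK //; lia.
move=> [i _ ->]; exists (inord i), (inord i.+1); split => //.
rewrite /pathrel /= !inordK ?eqxx //; move: (ltn_ord i); lia.
Qed.

Lemma modS (a m : nat) : a < m -> a.+1 %% m = if a.+1 == m then 0 else a.+1.
Proof.
move=> am; case: eqP => [->|ne]; first by rewrite modnn.
by rewrite modn_small //; lia.
Qed.

Lemma cyc_card n : 2 <= n -> #|edge_set (cycrel n.+1)| = n.+1.
Proof.
move=> n2.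
pose h (i : 'I_n.+1) : {set 'I_(n.+1)} := [set i; inord (i.+1 %% n.+1)].
have w (a : 'I_n.+1) : nat_of_ord (inord (a.+1 %% n.+1) : 'I_(n.+1)) = a.+1 %% n.+1.
  by rewrite inordK // ltn_pmod.
have hinj : injective h.
  move=> i j E.
  have : i \in h j by rewrite -E set21.
  have : j \in h i by rewrite E set21.
  rewrite !inE => /orP [/eqP -> //|/eqP /(congr1 (@nat_of_ord n.+1))]; rewrite w => H1
    /orP [/eqP -> //|/eqP /(congr1 (@nat_of_ord n.+1))]; rewrite w => H2.
  move: (ltn_ord i) (ltn_ord j) H1 H2 n2; clear => ? ? + + ?; rewrite !modS //.
  by case: ifP; case: ifP => *; exfalso; lia.
suff -> : edge_set (cycrel n.+1) = h @: setT by rewrite card_imset // cardsT card_ord.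
apply/setP => E; apply/in_edge_set/imsetP.
  move=> [x [y [/orP [] /eqP H ->]]].
    exists x => //; rewrite /h /=.
    by congr [set _; _]; apply: ord_inj; rewrite w.
  exists y => //; rewrite /h /= set2C.
  by congr [set _; _]; apply: ord_inj; rewrite w.
move=> [i _ ->]; exists i, (inord (i.+1 %% n.+1)); split => //.
by rewrite /cycrel /= w eqxx.
Qed.


Lemma avoid_sym (T : finType) k (e : rel T) (col : T -> 'I_k) c :
  symmetric e -> symmetric (avoid_rel e col c).
Proof.
move=> esym x y; rewrite /avoid_rel /= esym.
by case: (col x != c); case: (col y != c); rewrite ?andbF ?andbT.
Qed.

Lemma path_sym n : symmetric (pathrel n).
Proof. by move=> x y; rewrite /pathrel /cycrel /= orbC. Qed.
Lemma path_irr n : irreflexive (pathrel n).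
Proof. by move=> x; rewrite /pathrel /=; apply/negP => /orP [] /eqP; lia. Qed.
Lemma cyc_sym n : symmetric (cycrel n).
Proof. by move=> x y; rewrite /pathrel /cycrel /= orbC. Qed.
Lemma cyc_irr n : irreflexive (cycrel n.+2).
Proof.
move=> x; rewrite /cycrel /= orbb modS //; apply/negP => /eqP.
by case: eqP; lia.
Qed.

Lemma path_conn n (u v : 'I_n.+1) : connect (pathrel n.+1) u v.
Proof.
apply: (@conn_from _ _ predT (inord 0)) => //; first exact: path_sym.
move=> w _; rewrite -(inord_val w).
apply: (@chain _ _ (fun i => inord i) n) => [i lt|]; last by rewrite -ltnS.
by rewrite /pathrel /cycrel /= !inordK ?eqxx //; lia.
Qed.

Lemma cyc_conn n (u v : 'I_n.+1) : connect (cycrel n.+1) u v.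
Proof.
apply: (@conn_from _ _ predT (inord 0)) => //; first exact: cyc_sym.
move=> w _; rewrite -(inord_val w).
apply: (@chain _ _ (fun i => inord i) n) => [i lt|]; last by rewrite -ltnS.
rewrite /pathrel /cycrel /= !inordK; try lia. rewrite modn_small; try lia.
Qed.

Lemma part2 (n k : nat) : 0 < k -> k <= n ->
      exists (e : rel 'I_n) (col : 'I_n -> 'I_k),
        [/\ symmetric e, irreflexive e, uses_exactly col,
            vca_connected e col &
            #|edge_set e| = (if k <= 2 then n - 1 else n)].
Proof.
case: n => [|n]; first by case: k.
case: k => [//|[|[|k]]] _ kn.
-
  exists (pathrel n.+1), (fun _ => ord0); split.
  + exact: path_sym.
  + exact: path_irr.
  + by move=> i; exists ord0; rewrite [i]ord1.
  + by move=> c u v; split; [exact: path_conn | left; rewrite [c]ord1].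
  + by rewrite path_card /= subn1.
-
  case: n kn => [//|n] _.
  pose col (x : 'I_n.+2) : 'I_2 := if nat_of_ord x == 0 then ord_max else ord0.
  exists (pathrel n.+2), col; split.
  + exact: path_sym.
  + exact: path_irr.
  + move=> i; have [->|->] : i = ord0 \/ i = ord_max.
      by case: i => [[|[|//]]] h; [left|right]; apply: ord_inj.
      by exists (inord 1); rewrite /col inordK.
    by exists ord0.
  + move=> c u v; split; first exact: path_conn.
    have [cu|cu] := eqVneq (col u) c; first by left.
    have [cv|cv] := eqVneq (col v) c; first by right; left.
    right; right.
    have [ec|ec] : c = ord0 \/ c = ord_max.
      by case: c {cu cv} => [[|[|//]]] h; [left|right]; apply: ord_inj.
      subst c.
      have u0 : nat_of_ord u = 0 by move: cu; rewrite /col; case: (nat_of_ord u =P 0).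
      have v0 : nat_of_ord v = 0 by move: cv; rewrite /col; case: (nat_of_ord v =P 0).
      by have -> : u = v by apply: ord_inj; rewrite u0 v0.
    subst c.
    have Pc : forall x : 'I_n.+2, col x != ord_max -> nat_of_ord x != 0.
      by move=> x; rewrite /col; case: (nat_of_ord x =P 0).
    apply: (@conn_from _ _ [pred x : 'I_n.+2 | nat_of_ord x != 0] (inord 1)
       (avoid_sym _ _ (@path_sym n.+2))); last 2 first.
      exact: Pc.
      exact: Pc.
    move=> w /= w0.
    have -> : w = inord (w.-1).+1 by apply: ord_inj; rewrite inordK; move: w0 (ltn_ord w); rewrite ?inE /=; lia.
    apply: (@chain _ _ (fun i => inord i.+1) n) => [i lt|]; last by move: (ltn_ord w); lia.
    rewrite /avoid_rel /pathrel /col /= !inordK; try lia.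
    by rewrite eqxx.
  + by rewrite path_card /= subn1.
-
  pose col (x : 'I_n.+1) : 'I_k.+3 := inord (if nat_of_ord x < k.+3 then nat_of_ord x else 0).
  have colE x : nat_of_ord (col x) = if nat_of_ord x < k.+3 then nat_of_ord x else 0.
    by rewrite inordK //; case: ifP.
  exists (cycrel n.+1), col; split.
  + exact: cyc_sym.
  + case: n kn {col colE} => [//|n] _; exact: cyc_irr.
  + move=> i; exists (inord i); apply: ord_inj; rewrite colE inordK; last by move: (ltn_ord i) kn; lia.
    by rewrite ltn_ord.
  + move=> c u v; split; first exact: cyc_conn.
    have [cu|cu] := eqVneq (col u) c; first by left.
    have [cv|cv] := eqVneq (col v) c; first by right; left.
    right; right.
    have cl : nat_of_ord c < k.+3 := ltn_ord c.
    have [c0|c0] := eqVneq (nat_of_ord c) 0.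
      have PP x : col x != c -> (0 < nat_of_ord x) && (nat_of_ord x < k.+3).
        move=> cx; case: (boolP (_ && _)) => // H; exfalso; move/eqP: cx; apply.
        apply: ord_inj; rewrite colE c0; move: H; case: (ltnP x k.+3) => h; rewrite ?andbT ?andbF // => /negP; lia.
      have cne j : 0 < j < k.+3 -> col (inord j) != c.
        move=> hj; apply/eqP => /(congr1 (@nat_of_ord _)); rewrite colE c0 inordK; last lia.
        case: ltnP; lia.
      apply: (@conn_from _ _ [pred x : 'I_n.+1 | (0 < nat_of_ord x) && (nat_of_ord x < k.+3)] (inord 1)
         (avoid_sym _ _ (@cyc_sym n.+1))); last 2 first.
        exact: PP.
        exact: PP.
      move=> w /= w0.
      have -> : w = inord (w.-1).+1 by apply: ord_inj; rewrite inordK; move: w0 (ltn_ord w); lia.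
      apply: (@chain _ _ (fun i => inord i.+1) k.+1) => [i lt|]; last by move: w0; lia.
      rewrite /avoid_rel /= cne ?cne; try lia.
      rewrite /cycrel /= !inordK; try lia.
      by rewrite modn_small ?eqxx //; lia.
    have PP x : col x != c -> nat_of_ord x != nat_of_ord c.
      move=> cx; apply/eqP => H; move/eqP: cx; apply; apply: ord_inj.
      by rewrite colE H cl.
    have cne x : nat_of_ord x != nat_of_ord c -> col x != c.
      move=> hx; apply/eqP => /(congr1 (@nat_of_ord _)); rewrite colE.
      by move: hx c0; case: (ltnP x k.+3); lia.
    pose g i := if c.+1 + i < n.+1 then c.+1 + i else c.+1 + i - n.+1.
    have gl i : i <= n -> g i < n.+1 by rewrite /g; case: (ltnP (c.+1 + i) n.+1); lia.
    apply: (@conn_from _ _ [pred x : 'I_n.+1 | nat_of_ord x != nat_of_ord c] (inord (g 0))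
         (avoid_sym _ _ (@cyc_sym n.+1))); last 2 first.
      exact: PP.
      exact: PP.
    move=> w /= w0.
    pose j := if c < w then w - c.+1 else w + n.+1 - c.+1.
    have -> : w = inord (g j).
      apply: ord_inj; rewrite inordK; last by apply: gl; rewrite /j; move: (ltn_ord w) w0 cl kn; case: (ltnP c w); lia.
      rewrite /g /j; move: (ltn_ord w) w0 cl kn.
      case: (ltnP c w) => ? ? ? ? ?; case: ltnP; lia.
    have gS i : i < n.-1 -> g i.+1 = (g i).+1 %% n.+1.
      move=> lt; rewrite modS; last by apply: gl; lia.
      rewrite /g.
      case: (ltnP (c.+1 + i.+1) n.+1) => ?; case: (ltnP (c.+1 + i) n.+1) => ?;
        case: eqP; lia.
    have gc i : i <= n.-1 -> g i != c.
      by move=> lt; rewrite /g; case: (ltnP (c.+1 + i) n.+1); lia.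
    apply: (@chain _ _ (fun i => inord (g i)) n.-1) => [i lt|].
      apply/and3P; split.
      - rewrite /cycrel /= !inordK; try (apply: gl; lia).
        by rewrite gS // eqxx.
      - by apply: cne; rewrite inordK; [apply: gc; lia | apply: gl; lia].
      - by apply: cne; rewrite inordK; [apply: gc; lia | apply: gl; lia].
    rewrite /j; move: (ltn_ord w) w0 cl kn; case: (ltnP c w); lia.
  + by rewrite cyc_card //; lia.
Qed.


Theorem theorem3p11 :
  (forall (T : finType) (e : rel T) (k : nat) (col : T -> 'I_k),
      symmetric e -> irreflexive e -> 0 < k -> uses_exactly col ->
      vca_connected e col ->
      (if k <= 2 then #|T| - 1 else #|T|) <= #|edge_set e|)
  /\
  (forall n k : nat, 0 < k -> k <= n ->
      exists (e : rel 'I_n) (col : 'I_n -> 'I_k),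
        [/\ symmetric e, irreflexive e, uses_exactly col,
            vca_connected e col &
            #|edge_set e| = (if k <= 2 then n - 1 else n)]).
Proof.
split; last exact: part2.
move=> T e k col esym eirr k0 uses vca.
case: (leqP k 2) => [_|k3]; last exact: (part1_big esym k3 uses vca).
have conn u v : connect e u v.
  case: k col uses vca k0 => // k col uses vca _; exact: (vca ord0 u v).1.
have := @conn_bound T e setT (fun _ _ _ => in_setT _) (fun u v _ _ => conn u v).
rewrite cardsT; lia.
Qed.
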